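(* For $F\in(0,1]$, $k\in(0,1)$, real $d\ge 2$ and integer $n\ge 1$, let $G=k^{n-1}F$ and $$C_{\mathrm{dp}}(F,d,n,k)=\frac{(1-G)\,(4^{nd}G+2^{nd}-2)}{\big[(2^{nd}-2)G+1\big](2^{nd}-1)}.$$ If $F>2^{-d}$ and $k>2^{-d}$, then, for every $n\ge1$, $C_{\mathrm{dp}}$ is monotonically non-increasing as each of $F$, $d$ and $k$ increases (the other variables held fixed), i.e. $\partial_F C_{\mathrm{dp}}\le 0$, $\partial_d C_{\mathrm{dp}}\le 0$ and $\partial_k C_{\mathrm{dp}}\le 0$ at every such point.
   Context: Interpretation: for integers $d,n$, $C_{\mathrm{dp}}(F,d,n,k)$ equals $\sum_s\frac{4\lambda^+_s\lambda^-_s}{\lambda^+_s+\lambda^-_s}$ computed from the eigenvalues of the $nd$-qubit depolarized GHZ state $G|\mathrm{GHZ}_{nd}\rangle\langle\mathrm{GHZ}_{nd}|+\frac{1-G}{2^{nd}-1}(I-|\mathrm{GHZ}_{nd}\rangle\langle\mathrm{GHZ}_{nd}|)$ in the GHZ basis $|G^\pm_s\rangle=(|s\rangle\pm|\bar s\rangle)/\sqrt2$ (sum over one representative $s$ of each complementary pair of bit strings), i.e. a state whose fidelity $k^{n-1}F$ models imperfect local extension of a $d$-qubit GHZ state of fidelity $F$ to $n$ qubits per node with per-step quality $k$. *)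

(* Defs.v *)
From Stdlib Require Import Reals.
From Coquelicot Require Import Coquelicot.
Open Scope R_scope.

Definition Gfid (F : R) (n : nat) (k : R) : R := k ^ (n - 1) * F.

Definition Cdp (F d : R) (n : nat) (k : R) : R :=
  let G := Gfid F n k in
  let N := Rpower 2 (INR n * d) in
  (1 - G) * (Rpower 4 (INR n * d) * G + N - 2)
  / (((N - 2) * G + 1) * (N - 1)).

(* Main.v *)
Require Import Defs.
From Stdlib Require Import Reals Lra Lia.
From Coquelicot Require Import Coquelicot.
Open Scope R_scope.

Lemma dG (a N G0 : R) : (N-2)*G0+1 <> 0 -> N-1 <> 0 ->
  is_derive (fun G => (1-G)*(a*G+N-2)/(((N-2)*G+1)*(N-1))) G0
   ((-a*(N-2)*G0^2 - 2*a*G0 + a - (N-2)*(N-1)) / (((N-2)*G0+1)^2*(N-1))).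
Proof. intros H1 H2. auto_derive. apply Rmult_integral_contrapositive; auto.
field. auto. Qed.

Lemma dN (G N0 : R) : (N0-2)*G+1 <> 0 -> N0-1 <> 0 ->
  is_derive (fun N => (1-G)*(N^2*G+N-2)/(((N-2)*G+1)*(N-1))) N0
   ((1-G)*(-(N0*G-1)*((3*N0-4)*G+1)) / (((N0-2)*G+1)^2*(N0-1)^2)).
Proof. intros H1 H2. auto_derive. apply Rmult_integral_contrapositive; auto.
field. auto. Qed.

Lemma R4 y : Rpower 4 y = (Rpower 2 y)^2.
Proof. unfold Rpower. simpl. rewrite Rmult_1_r, <- exp_plus.
 f_equal. replace 4 with (2*2) by lra. rewrite ln_mult by lra. ring. Qed.

Lemma divnp (x y : R) : x <= 0 -> 0 < y -> x / y <= 0.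
Proof. intros. unfold Rdiv. assert (0 < /y) by (apply Rinv_0_lt_compat; lra). nra. Qed.

Theorem proposition3 (F d k : R) (n : nat) :
  0 < F <= 1 -> 0 < k < 1 -> 2 <= d -> (1 <= n)%nat ->
  Rpower 2 (- d) < F -> Rpower 2 (- d) < k ->
  (ex_derive (fun x => Cdp x d n k) F /\ Derive (fun x => Cdp x d n k) F <= 0) /\
  (ex_derive (fun x => Cdp F x n k) d /\ Derive (fun x => Cdp F x n k) d <= 0) /\
  (ex_derive (fun x => Cdp F d n x) k /\ Derive (fun x => Cdp F d n x) k <= 0).
Proof.
  intros HF Hk Hd Hn HaF Hak.
  set (N := Rpower 2 (INR n * d)).
  set (a := Rpower 2 (- d)) in *.
  set (G := k^(n-1)*F).
  assert (HnR : 1 <= INR n) by (apply (le_INR 1); exact Hn).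
  assert (HN4 : 4 <= N).
  { unfold N. replace 4 with (Rpower 2 (INR 2)).
    - apply Rle_Rpower; [lra|]. simpl. nra.
    - rewrite Rpower_pow by lra. simpl; ring. }
  assert (Ha : 0 < a) by (unfold a, Rpower; apply exp_pos).
  assert (Hkp : 0 < k^(n-1)) by (apply pow_lt; lra).
  assert (Hk1 : k^(n-1) <= 1).
  { rewrite <- (pow1 (n-1)). apply pow_incr; lra. }
  assert (Hak1 : a^(n-1) <= k^(n-1)).
  { apply pow_incr. lra. }
  assert (Han : a^(n-1)*a = a^n).
  { replace n with (S (n-1)) at 2 by lia. simpl; ring. }
  assert (HaN : N * a^n = 1).
  { unfold N. rewrite <- Rpower_pow by lra. unfold a. rewrite Rpower_mult.
    rewrite <- Rpower_plus. replace (INR n * d + - d * INR n) with 0 by ring.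
    apply Rpower_O; lra. }
  assert (Hapos : 0 < a^(n-1)) by (apply pow_lt; lra).
  assert (HG1 : G <= 1) by (unfold G; nra).
  assert (HGp : 0 < G) by (unfold G; nra).
  assert (HNG : 1 < N * G).
  { assert (a^(n-1)*a < a^(n-1)*F) by (apply Rmult_lt_compat_l; lra).
    assert (a^(n-1)*F <= k^(n-1)*F) by (apply Rmult_le_compat_r; lra).
    assert (a^n < G) by (unfold G; lra).
    assert (N*a^n < N*G) by (apply Rmult_lt_compat_l; lra). lra. }
  assert (Hden1 : (N-2)*G+1 <> 0) by nra.
  assert (Hden2 : N-1 <> 0) by lra.
  assert (DGneg : forall A, A = N^2 ->
     (-A*(N-2)*G^2 - 2*A*G + A - (N-2)*(N-1)) / (((N-2)*G+1)^2*(N-1)) <= 0).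
  { intros A ->. apply divnp.
    - replace (-N^2*(N-2)*G^2 - 2*N^2*G + N^2 - (N-2)*(N-1))
        with (-((N*G-1)*(N*(N-2)*G+3*N-2))) by ring.
      assert (0 <= (N*G-1)*(N*(N-2)*G+3*N-2)); [|lra].
      apply Rmult_le_pos; nra.
    - apply Rmult_lt_0_compat; [apply pow_lt|]; nra. }
  split; [|split].
  -
    assert (H : is_derive (fun x => Cdp x d n k) F
      (k^(n-1) * ((-(Rpower 4 (INR n*d))*(N-2)*G^2 - 2*(Rpower 4 (INR n*d))*G
          + Rpower 4 (INR n*d) - (N-2)*(N-1)) / (((N-2)*G+1)^2*(N-1))))).
    { apply (is_derive_ext (fun x => (fun G => (1-G)*(Rpower 4 (INR n*d)*G+N-2)/(((N-2)*G+1)*(N-1))) ((fun x => k^(n-1)*x) x))).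
      { intro t. reflexivity. }
      apply (is_derive_comp (fun G => (1-G)*(Rpower 4 (INR n*d)*G+N-2)/(((N-2)*G+1)*(N-1))) (fun x => k^(n-1)*x)).
      - apply dG; assumption.
      - auto_derive; [exact I|ring]. }
    split; [eexists; exact H|]. erewrite is_derive_unique by exact H.
    assert (Hx := DGneg _ (R4 _)). nra.
  -
    assert (H : is_derive (fun x => Cdp F x n k) d
      ((INR n * ln 2 * N) * ((1-G)*(-(N*G-1)*((3*N-4)*G+1)) / (((N-2)*G+1)^2*(N-1)^2)))).
    { apply (is_derive_ext (fun x => (fun M => (1-G)*(M^2*G+M-2)/(((M-2)*G+1)*(M-1))) ((fun x => Rpower 2 (INR n * x)) x))).
      { intro t. unfold Cdp, Gfid. rewrite R4. reflexivity. }
      apply (is_derive_comp (fun M => (1-G)*(M^2*G+M-2)/(((M-2)*G+1)*(M-1))) (fun x => Rpower 2 (INR n * x))).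
      - apply dN; assumption.
      - unfold N, Rpower. auto_derive; [exact I|ring]. }
    split; [eexists; exact H|]. erewrite is_derive_unique by exact H.
    assert (Hl2 : 0 < ln 2) by (rewrite <- ln_1; apply ln_increasing; lra).
    assert (HNp : 0 < INR n * ln 2 * N) by (apply Rmult_lt_0_compat; nra).
    assert (0 <= (N*G-1)*((3*N-4)*G+1)) by (apply Rmult_le_pos; nra).
    assert ((1-G)*(-(N*G-1)*((3*N-4)*G+1)) / (((N-2)*G+1)^2*(N-1)^2) <= 0).
    { apply divnp; [nra|]. apply Rmult_lt_0_compat; apply pow_lt; nra. }
    nra.
  -
    assert (H : is_derive (fun x => Cdp F d n x) k
      ((INR (n-1)*k^(pred(n-1))*F) * ((-(Rpower 4 (INR n*d))*(N-2)*G^2 - 2*(Rpower 4 (INR n*d))*G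
          + Rpower 4 (INR n*d) - (N-2)*(N-1)) / (((N-2)*G+1)^2*(N-1))))).
    { apply (is_derive_ext (fun x => (fun G => (1-G)*(Rpower 4 (INR n*d)*G+N-2)/(((N-2)*G+1)*(N-1))) ((fun x => x^(n-1)*F) x))).
      { intro t. reflexivity. }
      apply (is_derive_comp (fun G => (1-G)*(Rpower 4 (INR n*d)*G+N-2)/(((N-2)*G+1)*(N-1))) (fun x => x^(n-1)*F)).
      - apply dG; assumption.
      - auto_derive; [exact I|ring]. }
    split; [eexists; exact H|]. erewrite is_derive_unique by exact H.
    assert (Hx := DGneg _ (R4 _)).
    assert (0 <= INR (n-1)*k^(pred(n-1))*F).
    { apply Rmult_le_pos; [|lra]. apply Rmult_le_pos; [apply pos_INR|apply pow_le; lra]. }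
    nra.
Qed.
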